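(* Let $p\in\mathbf{C}[x_1,\dots,x_n]$ have the following property: whenever $\psi$ is an injective $\mathbf{C}$-algebra endomorphism of $\mathbf{C}[x_1,\dots,x_n]$ with $\psi(p)=p$, $\psi$ is an automorphism of $\mathbf{C}[x_1,\dots,x_n]$. If $q \in \mathbf{C}[x_1,\dots,x_n]$ and $\varphi(p)=q$ for some automorphism $\varphi$ of $\mathbf{C}[x_1,\dots,x_N]$ with $N\ge n$, then $\alpha(p)=q$ for some automorphism $\alpha$ of $\mathbf{C}[x_1,\dots,x_n]$.
   Context: Automorphisms are $\mathbf{C}$-algebra automorphisms; $\mathbf{C}[x_1,\dots,x_n]$ is regarded as a subalgebra of $\mathbf{C}[x_1,\dots,x_N]$. *)

(* Defs.v *)
From mathcomp Require Import all_boot all_algebra.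
From mathcomp Require Import reals complex Rstruct.
From mathcomp Require Import mpoly.
Set Implicit Arguments. Unset Strict Implicit. Unset Printing Implicit Defensive.
Import GRing.Theory.
Local Open Scope ring_scope.

Definition C : closedFieldType := (Rdefinitions.R)[i]%C.

Definition alg_endo (A : algType C) (f : A -> A) : Prop :=
  [/\ forall x y, f (x + y) = f x + f y,
      forall (a : C) x, f (a *: x) = a *: f x,
      forall x y, f (x * y) = f x * f y
    & f 1 = 1].

Definition alg_aut (A : algType C) (f : A -> A) : Prop :=
  alg_endo f /\ bijective f.

Definition incl_poly (n N : nat) (h : (n <= N)%N) (p : {mpoly C[n]}) : {mpoly C[N]} :=
  comp_mpoly [tuple 'X_(widen_ord h i) | i < n] p.
Arguments incl_poly {n N} h p.

(* Main.v *)
Require Import Defs.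
From mathcomp Require Import all_boot all_algebra.
From mathcomp Require Import mpoly.
From mathcomp Require Import reals complex Rstruct.
Local Open Scope ring_scope.

Module Helpers.
Set Implicit Arguments. Unset Strict Implicit. Unset Printing Implicit Defensive.
Import GRing.Theory.


Section Gen.
Variable K : fieldType.

Definition amor (A B : algType K) (f : A -> B) : Prop :=
  [/\ forall x y, f (x + y) = f x + f y,
      forall (a : K) x, f (a *: x) = a *: f x,
      forall x y, f (x * y) = f x * f y
    & f 1 = 1].

Section Amor.
Variables (A B : algType K) (f : A -> B) (hf : amor f).

Lemma amor0 : f 0 = 0.
Proof. case: hf => hD _ _ _; apply: (addrI (f 0)).
by rewrite -hD !addr0. Qed.

Lemma amorB x y : f (x - y) = f x - f y.
Proof. case: hf => hD hZ _ _; have -> : - y = (-1) *: y by rewrite scaleN1r.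
by rewrite hD hZ scaleN1r. Qed.
End Amor.

Lemma amorD (A B : algType K) (f : A -> B) : amor f -> forall x y, f (x + y) = f x + f y.
Proof. by case. Qed.
Lemma amorZ (A B : algType K) (f : A -> B) : amor f -> forall a x, f (a *: x) = a *: f x.
Proof. by case. Qed.
Lemma amorM (A B : algType K) (f : A -> B) : amor f -> forall x y, f (x * y) = f x * f y.
Proof. by case. Qed.
Lemma amor1 (A B : algType K) (f : A -> B) : amor f -> f 1 = 1.
Proof. by case. Qed.

Lemma amor_sum (A B : algType K) (f : A -> B) (I : Type) (s : seq I) (P : pred I) F :
  amor f -> f (\sum_(i <- s | P i) F i) = \sum_(i <- s | P i) f (F i).
Proof. move=> hf; exact: (big_morph f (amorD hf) (amor0 hf)). Qed.

Lemma amor_prod (A B : algType K) (f : A -> B) (I : Type) (s : seq I) (P : pred I) F :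
  amor f -> f (\prod_(i <- s | P i) F i) = \prod_(i <- s | P i) f (F i).
Proof. move=> hf; exact: (big_morph f (amorM hf) (amor1 hf)). Qed.

Lemma amorX (A B : algType K) (f : A -> B) x k : amor f -> f (x ^+ k) = f x ^+ k.
Proof. move=> hf; elim: k => [|k IH]; first by rewrite !expr0 (amor1 hf).
by rewrite !exprS (amorM hf) IH. Qed.

Lemma amor_compose (A B D : algType K) (f : A -> B) (g : B -> D) :
  amor f -> amor g -> amor (g \o f).
Proof.
move=> hf hg; split=> /=.
- by move=> x y; rewrite (amorD hf) (amorD hg).
- by move=> a x; rewrite (amorZ hf) (amorZ hg).
- by move=> x y; rewrite (amorM hf) (amorM hg).
- by rewrite (amor1 hf) (amor1 hg).
Qed.

Lemma amor_comp_mpoly (m k : nat) (lq : m.-tuple {mpoly K[k]}) :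
  amor (comp_mpoly lq).
Proof.
split.
- exact: comp_mpolyD.
- by move=> a x; rewrite comp_mpolyZ.
- exact: rmorphM.
- exact: comp_mpoly1.
Qed.

Lemma amor_mPo (m k l : nat) (f : {mpoly K[k]} -> {mpoly K[l]})
   (lq : m.-tuple {mpoly K[k]}) p :
  amor f -> f (p \mPo lq) = p \mPo [tuple f (tnth lq i) | i < m].
Proof.
move=> hf; rewrite !comp_mpolyE (amor_sum _ _ _ hf); apply: eq_bigr => mm _.
rewrite (amorZ hf) (amor_prod _ _ _ hf); congr (_ *: _); apply: eq_bigr => i _.
by rewrite (amorX _ _ hf) tnth_mktuple.
Qed.

Lemma amor_inv (A : algType K) (f g : A -> A) :
  amor f -> cancel f g -> cancel g f -> amor g.
Proof.
move=> hf fK gK; have fI := can_inj fK.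
split.
- by move=> x y; apply: fI; rewrite (amorD hf) !gK.
- by move=> a x; apply: fI; rewrite (amorZ hf) !gK.
- by move=> x y; apply: fI; rewrite (amorM hf) !gK.
- by apply: fI; rewrite (amor1 hf) gK.
Qed.

Lemma endo_mPo (k : nat) (f : {mpoly K[k]} -> {mpoly K[k]}) p :
  amor f -> f p = p \mPo [tuple f 'X_i | i < k].
Proof.
move=> hf.
have := amor_mPo [tuple 'X_i | i < k] p hf.
have -> : [tuple f (tnth [tuple 'X_i0 | i0 < k] i) | i < k] = [tuple f 'X_i | i < k].
  by apply: eq_from_tnth => i; rewrite !tnth_mktuple.
move=> <-; congr f; exact: (esym (comp_mpoly_id p)).
Qed.

Lemma mderivXU (k : nat) (i j : 'I_k) :
  mderiv j ('X_i : {mpoly K[k]}) = (i == j)%:R%:MP.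
Proof.
rewrite mderivX mnm1E; case: eqP => [->|_].
  have -> : (U_(j) - U_(j) = 0)%MM by apply/mnmP => l; rewrite mnmBE subnn mnmE.
  by rewrite mpolyX0 scale1r mpolyC1.
by rewrite scale0r mpolyC0.
Qed.

Lemma chain_rule (m k : nat) (lq : m.-tuple {mpoly K[k]}) (j : 'I_k) p :
  mderiv j (p \mPo lq) =
  \sum_(i < m) (mderiv i p \mPo lq) * mderiv j (tnth lq i).
Proof.
pose P (p : {mpoly K[m]}) := mderiv j (p \mPo lq) =
  \sum_(i < m) (mderiv i p \mPo lq) * mderiv j (tnth lq i).
have P0 : P 0 by rewrite /P comp_mpoly0 mderiv0 big1 // => i _; rewrite mderiv0 comp_mpoly0 mul0r.
have P1 : P 1.
  rewrite /P comp_mpoly1 -mpolyC1 mderivC big1 // => i _.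
  by rewrite mderivC comp_mpoly0 mul0r.
have PD : forall x y, P x -> P y -> P (x + y).
  move=> x y; rewrite /P => hx hy.
  rewrite comp_mpolyD mderivD hx hy -big_split; apply: eq_bigr => i _.
  by rewrite mderivD comp_mpolyD mulrDl.
have PZ : forall c x, P x -> P (c *: x).
  move=> c x; rewrite /P => hx; rewrite comp_mpolyZ mderivZ hx scaler_sumr.
  by apply: eq_bigr => i _; rewrite mderivZ comp_mpolyZ scalerAl.
have PM : forall x y, P x -> P y -> P (x * y).
  move=> x y; rewrite /P => hx hy.
  rewrite rmorphM mderivM hx hy mulr_suml mulr_sumr -big_split.
  apply: eq_bigr => i _; rewrite mderivM comp_mpolyD !rmorphM /=.
  by rewrite mulrDl -!mulrA [X in _ * X + _]mulrC [X in _ + _ * X]mulrC !mulrA.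
have PX : forall i, P 'X_i.
  move=> i; rewrite /P comp_mpolyXU (bigD1 i) //= big1 ?addr0.
    by rewrite mderivXU eqxx mpolyC1 comp_mpoly1 mul1r -tnth_nth.
  by move=> i' ne; rewrite mderivXU eq_sym (negbTE ne) mpolyC0 comp_mpoly0 mul0r.
have PXm : forall mm, P 'X_[mm].
  move=> mm; rewrite mpolyXE_id; apply: (big_ind P) => // i _.
  elim: (mm i) => [|e IH]; first by rewrite expr0.
  by rewrite exprS; apply: PM.
elim/mpolyind: p => // c mm p _ _ hp; apply: PD => //; exact: PZ.
Qed.

End Gen.

Section Jac.
Variable K : fieldType.
Hypothesis hchar : [pchar K] =i pred0.

Lemma natK_neq0 k : (0 < k)%N -> (k%:R : K) != 0.
Proof. by move=> kp; rewrite ((pcharf0P K).1 hchar) -lt0n. Qed.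

Lemma mulrn_neq0 (x : K) k : x != 0 -> (0 < k)%N -> x *+ k != 0.
Proof. by move=> hx hk; rewrite -mulr_natr mulf_neq0 // natK_neq0. Qed.

Lemma msize_mderiv (k : nat) (p : {mpoly K[k]}) i :
  (msize (mderiv i p) <= (msize p).-1)%N.
Proof.
rewrite [X in (X <= _)%N]msizeE; apply/bigmax_leqP_seq => m hm _.
have : (m + U_(i))%MM \in msupp p.
  move: hm; rewrite !mcoeff_msupp mcoeff_mderiv; apply: contraNN => /eqP ->.
  by rewrite mul0rn.
move/msize_mdeg_lt; rewrite mdegD mdeg1 addn1.
by case: (msize p).
Qed.

Lemma deriv0_const (k : nat) (p : {mpoly K[k]}) :
  (forall i, mderiv i p = 0) -> p = (p@_0)%:MP.
Proof.
move=> hd; apply: msize1_polyC; rewrite msizeE; apply/bigmax_leqP_seq => m hm _.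
rewrite ltnS leqn0; apply/negPn/negP => hm0.
have [i hi] : exists i, (0 < m i)%N.
  apply/existsP; apply: contraNT hm0; rewrite negb_exists => /forallP h.
  rewrite mdegE; apply/eqP; apply: big1 => i _.
  by have := h i; rewrite lt0n negbK => /eqP.
have hle : (U_(i) <= m)%MM.
  apply/mnm_lepP => l; rewrite mnm1E; case: eqP => [<-|_] //.
have := hd i; move/(congr1 (mcoeff (m - U_(i))%MM)).
rewrite mcoeff_mderiv submK // mcoeff0 => /eqP; apply/negP.
apply: mulrn_neq0; first by rewrite -mcoeff_msupp.
by [].
Qed.

Lemma jac_inj (k : nat) (t : k.-tuple {mpoly K[k]}) :
  \det (\matrix_(i, j) mderiv j (tnth t i)) != 0 -> injective (comp_mpoly t).
Proof.
set J := \matrix_(i, j) _ => hJ.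
have H0 : forall d (r : {mpoly K[k]}), (msize r <= d)%N -> r \mPo t = 0 -> r = 0.
  elim=> [|d IH] r hs hr.
    by apply/eqP; rewrite -msize_poly_eq0 -leqn0.
  have hder : forall i, mderiv i r \mPo t = 0.
    pose v : 'rV_k := \row_i (mderiv i r \mPo t).
    have hv : v *m J = 0.
      apply/matrixP => z j; rewrite !mxE.
      rewrite [RHS](_ : 0 = mderiv j (r \mPo t)); last by rewrite hr mderiv0.
      by rewrite chain_rule; apply: eq_bigr => i _; rewrite !mxE.
    have : (\det J) *: v = 0.
      by rewrite -mul_mx_scalar -mul_mx_adj mulmxA hv mul0mx.
    move=> hz i; have := congr1 (fun M : 'rV_k => M 0 i) hz.
    rewrite /= !mxE => /eqP; rewrite mulf_eq0 (negbTE hJ) /= => /eqP.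
    done.
  have hd0 : forall i, mderiv i r = 0.
    move=> i; apply: IH (hder i).
    apply: leq_trans (msize_mderiv r i) _; rewrite -ltnS.
    by case: (msize r) hs.
  move: hr; rewrite (deriv0_const hd0) comp_mpolyC => ->.
  done.
move=> r1 r2 h; apply/eqP; rewrite -subr_eq0; apply/eqP.
by apply: (H0 (msize (r1 - r2))) => //; rewrite comp_mpolyB h subrr.
Qed.
End Jac.

Section LA.
Variable K : fieldType.
Hypothesis hchar : [pchar K] =i pred0.

Lemma natK_inj : injective (fun i : nat => i%:R : K).
Proof.
have h : forall i j, (i <= j)%N -> (i%:R : K) = j%:R -> i = j.
  move=> i j hij /eqP; rewrite eq_sym -subr_eq0 -natrB //.
  rewrite ((pcharf0P K).1 hchar) subn_eq0 => hji; apply/eqP.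
  by rewrite eqn_leq hij.
move=> i j /= hij; case: (leqP i j) => hle; first exact: h.
by apply/esym/h => //; apply: ltnW.
Qed.

Lemma poly_nonroot (Q : {poly K}) : Q != 0 -> exists t, ~~ root Q t.
Proof.
move=> hQ; pose rs := [seq (i%:R : K) | i <- iota 0 (size Q)].
have hu : uniq rs by rewrite map_inj_uniq ?iota_uniq //; exact: natK_inj.
case hall : (all (root Q) rs).
  have := max_poly_roots hQ hall hu; by rewrite size_map size_iota ltnn.
by move/negbT: hall => /allPn [t _ ht]; exists t.
Qed.

Lemma det_horner (k : nat) (M : 'M[{poly K}]_k) t :
  (\det M).[t] = \det (map_mx (horner_eval t) M).
Proof. by rewrite det_map_mx. Qed.

Lemma choose_t (k : nat) (E A0 : 'M[K]_k) :
  exists t : K, (E + t%:M) \in unitmx /\ (1%:M + t *: A0) \in unitmx.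
Proof.
pose Q1 := char_poly (- E).
pose Q2 := \det (1%:M + 'X *: map_mx polyC A0).
have h1 : forall t, Q1.[t] = \det (E + t%:M).
  move=> t; rewrite /Q1 /char_poly det_horner; congr (\det _).
  apply/matrixP => i j; rewrite !mxE /= horner_evalE.
  by rewrite hornerD hornerN hornerMn hornerX hornerC opprK addrC.
have h2 : forall t, Q2.[t] = \det (1%:M + t *: A0).
  move=> t; rewrite /Q2 det_horner; congr (\det _).
  apply/matrixP => i j; rewrite !mxE /= horner_evalE.
  by rewrite !hornerE; case: (i == j); rewrite ?hornerC ?horner0 ?horner1.
have nQ1 : Q1 != 0 by apply: monic_neq0; exact: char_poly_monic.
have nQ2 : Q2 != 0.
  apply/eqP => h0; have := h2 0; rewrite h0 horner0 scale0r addr0 det1.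
  by move/eqP; rewrite eq_sym oner_eq0.
have [t ht] := poly_nonroot (mulf_neq0 nQ1 nQ2).
exists t; move: ht; rewrite /root hornerM mulf_eq0 negb_or h1 h2 => /andP [a b].
by rewrite !unitmxE !unitfE.
Qed.
End LA.

Section Key.
Variable K : fieldType.
Hypothesis hchar : [pchar K] =i pred0.

Definition inclK (n N : nat) (h : (n <= N)%N) (p : {mpoly K[n]}) : {mpoly K[N]} :=
  comp_mpoly [tuple 'X_(widen_ord h i) | i < n] p.

Lemma key (n N : nat) (h : (n <= N)%N) (phi : {mpoly K[N]} -> {mpoly K[N]}) :
  amor phi -> bijective phi -> forall p q, phi (inclK h p) = inclK h q ->
  exists beta : {mpoly K[n]} -> {mpoly K[n]}, [/\ amor beta, injective beta & beta p = q].
Proof.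
move=> hphi [psi phiK psiK] p q hpq.
have hpsi := amor_inv hphi phiK psiK.
pose g := [tuple phi 'X_l | l < N].
have hg : forall r, phi r = r \mPo g by move=> r; exact: endo_mPo.
pose ev0 := meval (fun _ : 'I_N => (0 : K)).
pose M0 : 'M[K]_N := \matrix_(l, l') ev0 (mderiv l' (tnth g l)).
pose M1 : 'M[K]_N := \matrix_(a, i) ev0 (mderiv i (psi 'X_a) \mPo g).
have hM : M0 *m M1 = 1%:M.
  apply: mulmx1C; apply/matrixP => a j; rewrite !mxE.
  transitivity (ev0 (mderiv j ((psi 'X_a) \mPo g))); last first.
    by rewrite -hg psiK mderivXU /ev0 mevalC.
  rewrite /ev0 chain_rule rmorph_sum; apply: eq_bigr => i _.
  by rewrite rmorphM !mxE.
pose Iemb : 'M[K]_(N, n) := \matrix_(l, j) ((l == widen_ord h j)%:R).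
have hI : forall m' (B : 'M[K]_(N, m')) j c, (Iemb^T *m B) j c = B (widen_ord h j) c.
  move=> m' B j c; rewrite !mxE (bigD1 (widen_ord h j)) //= big1 ?addr0.
    by rewrite !mxE eqxx mul1r.
  by move=> l hl; rewrite !mxE (negbTE hl) mul0r.
have hI' : forall m' (B : 'M[K]_(m', N)) l j, (B *m Iemb) l j = B l (widen_ord h j).
  move=> m' B l j; rewrite !mxE (bigD1 (widen_ord h j)) //= big1 ?addr0.
    by rewrite !mxE eqxx mulr1.
  by move=> l' hl; rewrite !mxE (negbTE hl) mulr0.
have hII : Iemb^T *m Iemb = 1%:M.
  apply/matrixP => j c; rewrite hI !mxE.
  by have -> : (widen_ord h j == widen_ord h c) = (j == c) by [].
pose P := Iemb^T *m M0.
pose A0 := P *m Iemb.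
pose W1 := M1 *m Iemb.
pose E := Iemb^T *m W1.
have [t [hu1 hu2]] := choose_t hchar E A0.
pose L := (W1 + t *: Iemb) *m invmx (E + t%:M).
have hL : Iemb^T *m L = 1%:M.
  rewrite /L mulmxA mulmxDr -scalemxAr hII scalemx1 mulmxV //.
have hPW : P *m W1 = 1%:M by rewrite /P /W1 mulmxA -(mulmxA _ M0) hM mulmx1 hII.
have hPL : P *m L \in unitmx.
  rewrite /L mulmxA mulmxDr -scalemxAr hPW -/A0 unitmx_mul hu2 unitmx_inv hu1.
  done.
pose tpi : N.-tuple {mpoly K[n]} := [tuple \sum_(j < n) L l j *: 'X_j | l < N].
have htw : forall j, tnth tpi (widen_ord h j) = 'X_j.
  move=> j; rewrite tnth_mktuple (bigD1 j) //= big1 ?addr0.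
    by have := hI _ L j j; rewrite hL mxE eqxx => <-; rewrite scale1r.
  by move=> c hc; have := hI _ L j c; rewrite hL mxE eq_sym (negbTE hc) => <-; rewrite scale0r.
have hpi := amor_comp_mpoly tpi.
have hpi_incl : forall r, inclK h r \mPo tpi = r.
  move=> r; rewrite /inclK (amor_mPo _ _ hpi).
  have -> : [tuple tnth [tuple 'X_(widen_ord h i) | i < n] i \mPo tpi | i < n] = [tuple 'X_i | i < n].
    apply: eq_from_tnth => i; rewrite !tnth_mktuple comp_mpolyXU -tnth_nth.
    exact: htw.
  exact: comp_mpoly_id.
pose tb : n.-tuple {mpoly K[n]} := [tuple tnth g (widen_ord h i) \mPo tpi | i < n].
exists (comp_mpoly tb); split.
- exact: amor_comp_mpoly.
- apply: (jac_inj hchar).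
  have hz : forall l, meval (fun _ : 'I_n => (0 : K)) (tnth tpi l) = 0.
    move=> l; rewrite tnth_mktuple rmorph_sum big1 // => c _.
    by rewrite /= mevalZ mevalXU mulr0.
  have hd : forall l j, meval (fun _ : 'I_n => (0 : K)) (mderiv j (tnth tpi l)) = L l j.
    move=> l j; rewrite tnth_mktuple (big_morph (mderiv j) (mderivD j) (mderiv0 _ j)).
    rewrite rmorph_sum (bigD1 j) //= big1 ?addr0.
      by rewrite mderivZ mderivXU eqxx mevalZ mevalC mulr1.
    by move=> c hc; rewrite mderivZ mderivXU (negbTE hc) mevalZ mevalC mulr0.
  have hJ0 : map_mx (meval (fun _ : 'I_n => (0 : K)))
      (\matrix_(i, j) mderiv j (tnth tb i)) = P *m L.
    apply/matrixP => i j; rewrite !mxE tnth_mktuple chain_rule rmorph_sum.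
    apply: eq_bigr => l _; rewrite rmorphM /= hd /P hI !mxE; congr (_ * _).
    rewrite comp_mpoly_meval; apply: meval_eq => l'; exact: hz.
  apply/eqP => h0; move: hPL; rewrite unitmxE -hJ0 det_map_mx h0 rmorph0.
  by rewrite unitr0.
- have hc := amor_compose hphi hpi.
  have := amor_mPo [tuple 'X_(widen_ord h i) | i < n] p hc.
  rewrite /= -/(inclK h p) hpq hpi_incl => ->.
  congr (_ \mPo _); apply: eq_from_tnth => i; rewrite !tnth_mktuple.
  done.
Qed.

Lemma main_gen (n : nat) (p : {mpoly K[n]})
  (Hp : forall psi : {mpoly K[n]} -> {mpoly K[n]},
          amor psi -> injective psi -> psi p = p -> amor psi /\ bijective psi)
  (q : {mpoly K[n]}) (N : nat) (hnN : (n <= N)%N)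
  (phi : {mpoly K[N]} -> {mpoly K[N]})
  (Hphi : amor phi /\ bijective phi) (Hpq : phi (inclK hnN p) = inclK hnN q) :
  exists alpha : {mpoly K[n]} -> {mpoly K[n]}, (amor alpha /\ bijective alpha) /\ alpha p = q.
Proof.
case: Hphi => hphi hbij.
have [beta [hb binj bpq]] := key hphi hbij Hpq.
have [psi phiK psiK] := hbij.
have hpsi := amor_inv hphi phiK psiK.
have hbij' : bijective psi by exists phi.
have Hqp : psi (inclK hnN q) = inclK hnN p by rewrite -Hpq phiK.
have [gam [hg ginj gqp]] := key hpsi hbij' Hqp.
have hs := amor_compose hb hg.
have sinj : injective (gam \o beta) by apply: inj_comp.
have sp : (gam \o beta) p = p by rewrite /= bpq gqp.
have [_ [sinv sK sK']] := Hp _ hs sinj sp.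
pose ginv := beta \o sinv.
have c1 : cancel ginv gam by move=> r; rewrite /ginv /= -[RHS](sK' r).
have c2 : cancel gam ginv by move=> r; apply: ginj; rewrite c1.
exists ginv; split; first split.
- exact: amor_inv hg c2 c1.
- by exists gam.
- by rewrite -gqp c2.
Qed.
End Key.


End Helpers.

Theorem theorem1p5 (n : nat) (p : {mpoly C[n]})
  (Hp : forall psi : {mpoly C[n]} -> {mpoly C[n]},
          alg_endo psi -> injective psi -> psi p = p -> alg_aut psi)
  (q : {mpoly C[n]}) (N : nat) (hnN : (n <= N)%N)
  (phi : {mpoly C[N]} -> {mpoly C[N]})
  (Hphi : alg_aut phi) (Hpq : phi (incl_poly hnN p) = incl_poly hnN q) :
  exists alpha : {mpoly C[n]} -> {mpoly C[n]}, alg_aut alpha /\ alpha p = q.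
Proof.
have charC : [pchar C] =i pred0 by rewrite /C; exact: Num.Theory.pchar_num.
exact: (@Helpers.main_gen C charC n p Hp q N hnN phi Hphi Hpq).
Qed.
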